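(* Let $\pi(t)\in\mathbb R^m$, $t\ge0$, be vectors with nonnegative entries, $\mathbf 1_m^\top\pi(t)=1$, and $\pi(t)^\top=\pi(t+1)^\top A(t)$ for all $t\ge0$. Let $\theta_i(t)$ be generated by the DPG iteration and set $\bar\theta(t)=\sum_{j=1}^m\pi_j(t)\theta_j(t)$. Then for every $v\in\Omega$ and every $t\ge0$, $$\sum_{i=1}^m\pi_i(t+1)\|\theta_i(t+1)-v\|^2\le\sum_{i=1}^m\pi_i(t)\|\theta_i(t)-v\|^2-2\alpha(t)c^\top(\bar\theta(t)-v)+C^2\alpha^2(t)+2C\alpha(t)\sum_{i=1}^m\pi_i(t)\|\theta_i(t)-\bar\theta(t)\|-\sum_{i=1}^m\pi_i(t+1)\|\phi_i(t)\|^2.$$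
   Context: Agents $\mathcal V=\{1,\dots,m\}$. $A(t)=[a_{ij}(t)]\in\mathbb R^{m\times m}$, $t\in\mathbb Z_{\ge0}$, are row-stochastic matrices with nonnegative entries ($\sum_j a_{ij}(t)=1$). Let $\Omega_1,\dots,\Omega_m\subseteq\mathbb R^p$ be nonempty closed convex sets with $\Omega=\bigcap_i\Omega_i\neq\emptyset$, let $c\in\mathbb R^p$, $C=\|c\|$, and let $\alpha(t)>0$ be stepsizes. $P_K$ is Euclidean projection onto a closed convex set $K$. The DPG iteration, from arbitrary $\theta_i(0)\in\mathbb R^p$, is $\theta_i(t+1)=P_{\Omega_i}\big[\sum_{j=1}^m a_{ij}(t)\theta_j(t)-\alpha(t)c\big]$, and $\phi_i(t)=\theta_i(t+1)-\big[\sum_{j=1}^m a_{ij}(t)\theta_j(t)-\alpha(t)c\big]$. *)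

(* Defs.v *)
From HB Require Import structures.
From mathcomp Require Import all_boot all_order all_algebra.
From mathcomp Require Import all_classical all_reals all_analysis.
Set Implicit Arguments. Unset Strict Implicit. Unset Printing Implicit Defensive.
Import Order.TTheory GRing.Theory Num.Theory.
Import numFieldNormedType.Exports.
Local Open Scope ring_scope.
Local Open Scope classical_set_scope.

Definition dotv {R : realType} {p : nat} (u v : 'rV[R]_p) : R :=
  \sum_(k < p) u ord0 k * v ord0 k.
Definition enorm {R : realType} {p : nat} (u : 'rV[R]_p) : R :=
  Num.sqrt (dotv u u).

Definition is_proj {R : realType} {p : nat} (K : set 'rV[R]_p) (x y : 'rV[R]_p) : Prop :=
  K y /\ forall z, K z -> enorm (x - y) <= enorm (x - z).

Definition row_stochastic {R : realType} {m : nat} (A : 'M[R]_m) : Prop :=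
  (forall i j, 0 <= A i j) /\ (forall i, \sum_(j < m) A i j = 1).

Definition dpg_mix {R : realType} {m p : nat} (A : nat -> 'M[R]_m)
  (theta : nat -> 'I_m -> 'rV[R]_p) (alpha : nat -> R) (c : 'rV[R]_p)
  (t : nat) (i : 'I_m) : 'rV[R]_p :=
  \sum_(j < m) A t i j *: theta t j - alpha t *: c.

Definition dpg_phi {R : realType} {m p : nat} (A : nat -> 'M[R]_m)
  (theta : nat -> 'I_m -> 'rV[R]_p) (alpha : nat -> R) (c : 'rV[R]_p)
  (t : nat) (i : 'I_m) : 'rV[R]_p :=
  theta t.+1 i - dpg_mix A theta alpha c t i.

Definition wavg {R : realType} {m p : nat} (pi : nat -> 'I_m -> R)
  (theta : nat -> 'I_m -> 'rV[R]_p) (t : nat) : 'rV[R]_p :=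
  \sum_(j < m) pi t j *: theta t j.

(* Main.v *)
Require Import Defs.
From HB Require Import structures.
From mathcomp Require Import all_boot all_order all_algebra.
From mathcomp Require Import all_classical all_reals all_analysis.
From mathcomp Require Import ring lra.
Import Order.TTheory GRing.Theory Num.Theory.
Import numFieldNormedType.Exports.
Local Open Scope ring_scope.
Local Open Scope classical_set_scope.

Section S.
Context {R : realType} {p : nat}.
Implicit Types u v w : 'rV[R]_p.

Lemma dotvC u v : dotv u v = dotv v u.
Proof. by apply: eq_bigr => k _; rewrite mulrC. Qed.
Lemma dotvDl u v w : dotv (u + v) w = dotv u w + dotv v w.
Proof. by rewrite /dotv -big_split; apply: eq_bigr => k _; rewrite mxE mulrDl. Qed.
Lemma dotvNl u w : dotv (- u) w = - dotv u w.
Proof. by rewrite /dotv -sumrN; apply: eq_bigr => k _; rewrite mxE mulNr. Qed.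
Lemma dotvBl u v w : dotv (u - v) w = dotv u w - dotv v w.
Proof. by rewrite dotvDl dotvNl. Qed.
Lemma dotvZl a u w : dotv (a *: u) w = a * dotv u w.
Proof. by rewrite /dotv mulr_sumr; apply: eq_bigr => k _; rewrite mxE mulrA. Qed.
Lemma dotv_suml (I : finType) (F : I -> 'rV[R]_p) w :
  dotv (\sum_i F i) w = \sum_i dotv (F i) w.
Proof.
rewrite /dotv exchange_big /=; apply: eq_bigr => k _.
by rewrite summxE mulr_suml.
Qed.
Lemma dotvDr u v w : dotv w (u + v) = dotv w u + dotv w v.
Proof. by rewrite dotvC dotvDl !(dotvC w). Qed.
Lemma dotvBr u v w : dotv w (u - v) = dotv w u - dotv w v.
Proof. by rewrite dotvC dotvBl !(dotvC w). Qed.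
Lemma dotvZr a u w : dotv w (a *: u) = a * dotv w u.
Proof. by rewrite dotvC dotvZl dotvC. Qed.
Lemma dotv_ge0 u : 0 <= dotv u u.
Proof. by apply: sumr_ge0 => k _; rewrite -expr2 sqr_ge0. Qed.
Lemma enorm_sq u : enorm u ^+ 2 = dotv u u.
Proof. by rewrite /enorm sqr_sqrtr // dotv_ge0. Qed.
Lemma enorm_ge0 u : 0 <= enorm u.
Proof. exact: sqrtr_ge0. Qed.

Lemma dotvNr u w : dotv w (- u) = - dotv w u.
Proof. by rewrite dotvC dotvNl dotvC. Qed.
Lemma dotv_sqB u v : dotv (u - v) (u - v) = dotv u u - 2 * dotv u v + dotv v v.
Proof. rewrite dotvBl !dotvBr (dotvC v u); ring. Qed.
Lemma dotv_sqD u v : dotv (u + v) (u + v) = dotv u u + 2 * dotv u v + dotv v v.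
Proof. rewrite dotvDl !dotvDr (dotvC v u); ring. Qed.

Lemma proj_vi (K : set 'rV[R]_p) x y v :
  convex_set K -> is_proj K x y -> K v -> dotv (x - y) (v - y) <= 0.
Proof.
move=> cK [Ky Hy] Kv.
set d := dotv (x - y) (v - y); set N := dotv (v - y) (v - y).
rewrite leNgt; apply/negP => d0.
have N0 : 0 <= N by apply: dotv_ge0.
have dN : 0 < d + N by lra.
set s := d / (d + N).
have s0 : 0 <= s by rewrite divr_ge0 // ltW.
have s1 : s <= 1 by rewrite ler_pdivrMr // mul1r; lra.
pose l : {i01 R} := Itv01 s0 s1.
have Kz : K (conv l (v : convex_lmodType 'rV[R]_p) y).
  have := cK v y l; rewrite !inE; apply => //.
have ez : (conv l (v : convex_lmodType 'rV[R]_p) y : 'rV_p) = y + s *: (v - y).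
  rewrite /conv /= /unstable.onem scalerBl scale1r scalerBr.
  by rewrite addrCA.
have := Hy _ Kz; rewrite ez /enorm ler_sqrt ?dotv_ge0 //.
have -> : x - (y + s *: (v - y)) = (x - y) - s *: (v - y).
  by rewrite opprD addrA.
rewrite [X in _ <= X]dotv_sqB dotvZr dotvZl dotvZr -/d -/N.
have hs : s * (d + N) = d by rewrite /s divfK // gt_eqF.
have sp : 0 < s by rewrite divr_gt0.
move=> H.
have : 2 * s * d <= s * s * N by lra.
move=> H2.
have : 2 * d <= s * N.
  rewrite -(ler_pM2l sp); lra.
nra.
Qed.


Lemma proj_ineq (K : set 'rV[R]_p) x y v :
  convex_set K -> is_proj K x y -> K v ->
  dotv (y - v) (y - v) <= dotv (x - v) (x - v) - dotv (y - x) (y - x).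
Proof.
move=> cK hp Kv; have := @proj_vi K x y v cK hp Kv.
have -> : x - v = (x - y) + (y - v) by rewrite addrA subrK.
have -> : y - x = - (x - y) by rewrite opprB.
have -> : v - y = - (y - v) by rewrite opprB.
move: (x - y) (y - v) => a b.
rewrite dotv_sqD !dotvNl !dotvNr opprK; lra.
Qed.

Lemma jensen (m : nat) (a : 'I_m -> R) (w : 'I_m -> 'rV[R]_p) :
  (forall j, 0 <= a j) -> \sum_j a j = 1 ->
  dotv (\sum_j a j *: w j) (\sum_j a j *: w j) <= \sum_j a j * dotv (w j) (w j).
Proof.
move=> a0 a1; set mu := \sum_j a j *: w j.
have H : 0 <= \sum_j a j * dotv (w j - mu) (w j - mu).
  by apply: sumr_ge0 => j _; rewrite mulr_ge0 // dotv_ge0.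
have E : \sum_j a j * dotv (w j - mu) (w j - mu) =
   \sum_j a j * dotv (w j) (w j) - 2 * dotv mu mu + dotv mu mu * \sum_j a j.
  rewrite (eq_bigr (fun j => a j * dotv (w j) (w j) - 2 * (a j * dotv (w j) mu) + dotv mu mu * a j)); last first.
    by move=> j _; rewrite dotv_sqB; ring.
  have -> : dotv mu mu = \sum_j a j * dotv (w j) mu.
    by rewrite {1}/mu dotv_suml; apply: eq_bigr => j _; rewrite dotvZl.
  by rewrite big_split sumrB /= -mulr_sumr -mulr_sumr.
rewrite a1 mulr1 in E; lra.
Qed.
End S.

Theorem proposition6 (R : realType) (m p : nat)
  (A : nat -> 'M[R]_m) (Om : 'I_m -> set 'rV[R]_p) (c : 'rV[R]_p)
  (alpha : nat -> R) (pi : nat -> 'I_m -> R) (theta : nat -> 'I_m -> 'rV[R]_p) :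
  (forall t, row_stochastic (A t)) ->
  (forall i, Om i !=set0) ->
  (forall i, closed (Om i)) ->
  (forall i, convex_set (Om i)) ->
  (\bigcap_(i in [set: 'I_m]) Om i) !=set0 ->
  (forall t, 0 < alpha t) ->
  (forall t i, 0 <= pi t i) ->
  (forall t, \sum_(i < m) pi t i = 1) ->
  (forall t j, pi t j = \sum_(i < m) pi t.+1 i * A t i j) ->
  (forall t i, is_proj (Om i) (dpg_mix A theta alpha c t i) (theta t.+1 i)) ->
  forall v : 'rV[R]_p, (forall i, Om i v) ->
  forall t : nat,
    \sum_(i < m) pi t.+1 i * enorm (theta t.+1 i - v) ^+ 2
    <= \sum_(i < m) pi t i * enorm (theta t i - v) ^+ 2
       - 2 * alpha t * dotv c (wavg pi theta t - v)
       + enorm c ^+ 2 * alpha t ^+ 2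
       + 2 * enorm c * alpha t * \sum_(i < m) pi t i * enorm (theta t i - wavg pi theta t)
       - \sum_(i < m) pi t.+1 i * enorm (dpg_phi A theta alpha c t i) ^+ 2.
Proof.
move=> hA _ _ hconv _ ha hpi0 hpi1 hpiA hproj v hv t.
set P' := pi t.+1.
set x := dpg_mix A theta alpha c t.
set N := fun u : 'rV[R]_p => dotv u u.
have hN : forall u, enorm u ^+ 2 = N u by move=> u; exact: enorm_sq.
under eq_bigr => i _ do rewrite hN.
under [X in _ <= _ - X]eq_bigr => i _ do rewrite hN.
under [\sum_(i < m) pi t i * _]eq_bigr => i _ do rewrite hN.
rewrite hN.
set w := fun i => \sum_j A t i j *: (theta t j - v).
have hx : forall i, x i - v = w i - alpha t *: c.
  move=> i; rewrite /x /dpg_mix /w.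
  under [X in _ = X - _]eq_bigr => j _ do rewrite scalerBr.
  rewrite sumrB -scaler_suml (proj2 (hA t) i) scale1r.
  by rewrite addrAC.
have H1 : \sum_i P' i * N (theta t.+1 i - v) <=
    \sum_i P' i * (N (x i - v) - N (dpg_phi A theta alpha c t i)).
  apply: ler_sum => i _; apply: ler_wpM2l; first exact: hpi0.
  by have := @proj_ineq _ _ (Om i) _ _ v (hconv i) (hproj t i) (hv i).
have H2 : forall i, N (x i - v) <=
    \sum_j A t i j * N (theta t j - v) - 2 * alpha t * dotv (w i) c + alpha t ^+ 2 * N c.
  move=> i; rewrite hx /N dotv_sqB dotvZr dotvZl dotvZr.
  have := @jensen _ _ m (fun j => A t i j) (fun j => theta t j - v) (proj1 (hA t) i) (proj2 (hA t) i).
  rewrite -/(w i) => J; lra.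
have H2' : \sum_i P' i * N (x i - v) <=
   \sum_i P' i * (\sum_j A t i j * N (theta t j - v) - 2 * alpha t * dotv (w i) c + alpha t ^+ 2 * N c).
  by apply: ler_sum => i _; apply: ler_wpM2l; [exact: hpi0 | exact: H2].
have H3 : \sum_i P' i * (\sum_j A t i j * N (theta t j - v) - 2 * alpha t * dotv (w i) c + alpha t ^+ 2 * N c)
   = \sum_j pi t j * N (theta t j - v) - 2 * alpha t * dotv c (wavg pi theta t - v) + N c * alpha t ^+ 2.
  have E0 : forall f : 'I_m -> R,
      \sum_i P' i * (\sum_j A t i j * f j) = \sum_j pi t j * f j.
    move=> f; under eq_bigr => i _ do rewrite mulr_sumr.
    rewrite exchange_big /=; apply: eq_bigr => j _.
    by rewrite hpiA mulr_suml; apply: eq_bigr => i _; rewrite mulrA.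
  have E2 : \sum_i P' i * dotv (w i) c = dotv c (wavg pi theta t - v).
    have -> : wavg pi theta t - v = \sum_j pi t j *: (theta t j - v).
      under [RHS]eq_bigr => j _ do rewrite scalerBr.
      by rewrite sumrB -scaler_suml hpi1 scale1r.
    rewrite dotvC dotv_suml [RHS](eq_bigr (fun j => pi t j * dotv (theta t j - v) c)); last first.
      by move=> j _; rewrite dotvZl.
    rewrite -(E0 (fun j => dotv (theta t j - v) c)).
    apply: eq_bigr => i _; rewrite /w dotv_suml; congr (_ * _).
    by apply: eq_bigr => j _; rewrite dotvZl.
  have E3 : \sum_i P' i = 1 by exact: hpi1.
  rewrite (eq_bigr (fun i => P' i * (\sum_j A t i j * N (theta t j - v)) - 2 * alpha t * (P' i * dotv (w i) c) + alpha t ^+ 2 * N c * P' i)); last first.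
    by move=> i _; ring.
  rewrite big_split sumrB /= -!mulr_sumr E0 E2 E3; ring.
have H4 : 0 <= 2 * enorm c * alpha t * \sum_(i < m) pi t i * enorm (theta t i - wavg pi theta t).
  apply: mulr_ge0; [apply: mulr_ge0; [apply: mulr_ge0; [by [] | exact: enorm_ge0] | exact: ltW] | ].
  by apply: sumr_ge0 => i _; apply: mulr_ge0; [exact: hpi0 | exact: enorm_ge0].
have H5 : \sum_i P' i * (N (x i - v) - N (dpg_phi A theta alpha c t i)) =
   \sum_i P' i * N (x i - v) - \sum_i P' i * N (dpg_phi A theta alpha c t i).
  by rewrite -sumrB; apply: eq_bigr => i _; rewrite mulrBr.
lra.
Qed.
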